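(* Let $(X,\mathcal{A})$ be a $(v,k,\lambda)$-BIBD with $k\ge 2$, and let $r=\lambda(v-1)/(k-1)$. If $(X,\mathcal{A})$ has a weak nesting $\phi:\mathcal{A}\to Y$ into a partial $(w,k+1,\lambda+1)$-BIBD, where $X\subseteq Y$ and $|Y|=w$, then \[ w\ \ge\ \frac{r}{\lambda+1}+\frac{v+2\lambda v+1}{2(\lambda+1)}. \]
   Context: A $(v,k,\lambda)$-BIBD is a pair $(X,\mathcal{A})$ where $X$ is a set of $v$ points and $\mathcal{A}$ is a multiset of $k$-subsets of $X$ (blocks) such that every pair of distinct points lies in exactly $\lambda$ blocks. A partial $(w,k,\lambda)$-BIBD is defined in the same way on $w$ points, except that every pair lies in at most $\lambda$ blocks. Given a $(v,k,\lambda)$-BIBD $(X,\mathcal{A})$ and a set $Y\supseteq X$ with $|Y|=w$, a map $\phi:\mathcal{A}\to Y$ is a weak nesting if $\phi(A)\notin A$ for every block $A$ and the multiset $\{A\cup\{\phi(A)\}:A\in\mathcal{A}\}$ is a partial $(w,k+1,\lambda+1)$-BIBD on $Y$. *)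

(* Defs.v *)
From mathcomp Require Import all_boot all_order all_algebra.
Set Implicit Arguments. Unset Strict Implicit. Unset Printing Implicit Defensive.

(* Blocks are given as an indexed family A : 'I_b -> {set T} (a multiset of
   blocks, repetitions allowed), on a point set X : {set T}, T a finType. *)

Definition is_BIBD (T : finType) (X : {set T}) (b : nat) (A : 'I_b -> {set T})
    (v k lam : nat) : Prop :=
  #|X| = v /\
  (forall i, A i \subset X /\ #|A i| = k) /\
  (forall x y, x \in X -> y \in X -> x != y ->
     #|[set i | (x \in A i) && (y \in A i)]| = lam).

Definition is_partial_BIBD (T : finType) (Y : {set T}) (b : nat)
    (B : 'I_b -> {set T}) (w k lam : nat) : Prop :=
  #|Y| = w /\
  (forall i, B i \subset Y /\ #|B i| = k) /\
  (forall x y, x \in Y -> y \in Y -> x != y ->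
     #|[set i | (x \in B i) && (y \in B i)]| <= lam).

Definition weak_nesting (T : finType) (Y : {set T}) (b : nat)
    (A : 'I_b -> {set T}) (phi : 'I_b -> T) (k lam : nat) : Prop :=
  (forall i, phi i \in Y /\ phi i \notin A i) /\
  is_partial_BIBD Y (fun i => A i :|: [set phi i]) #|Y| k.+1 lam.+1.

(* Main.v *)
Require Import Defs.
From mathcomp Require Import all_boot all_order all_algebra.
From mathcomp Require Import zify ring lra.
Import Order.TTheory GRing.Theory Num.Theory.

Lemma card_sum (I : finType) (P : pred I) :
  #|[set i | P i]| = \sum_i (P i : nat).
Proof.
rewrite -sum1_card big_mkcond /=; apply: eq_bigr => i _; rewrite inE.
by case: (P i).
Qed.

Lemma sum_ind (I : finType) (S : pred I) (P : pred I) :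
  \sum_(i in S) (P i : nat) = #|[pred i in S | P i]|.
Proof.
rewrite -sum1_card big_mkcondr /=; apply: eq_bigr => i _; by case: (P i).
Qed.

Theorem theorem3p1 (T : finType) (X Y : {set T}) (b : nat)
    (A : 'I_b -> {set T}) (phi : 'I_b -> T) (v k lam w : nat) :
  (2 <= k)%N -> (0 < v)%N ->
  is_BIBD X A v k lam ->
  X \subset Y -> #|Y| = w ->
  weak_nesting Y A phi k lam ->
  let r : rat := ((lam * (v - 1))%:R / (k - 1)%:R)%R in
  (r / (lam + 1)%:R + (v + 2 * lam * v + 1)%:R / (2 * (lam + 1))%:R
     <= (w%:R : rat))%R.
Proof.
move=> k2 v0 [cX [hA hl]] XY cY [hphi [_ [_ hB]]].
pose E x y := \sum_i ((x \in A i) && (phi i == y) : nat).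
pose N0 x y := \sum_i ((x \in A i) && (y \in A i) : nat).
pose rx x := \sum_i ((x \in A i) : nat).
have hl' x y : x \in X -> y \in X -> x != y -> N0 x y = lam.
  by move=> hx hy nxy; rewrite /N0 -card_sum hl.
have key x y : x \in Y -> y \in Y -> x != y -> N0 x y + E x y + E y x <= lam.+1.
  move=> hx hy nxy; have := hB x y hx hy nxy; rewrite card_sum.
  apply: leq_trans; rewrite /N0 /E -!big_split /=; apply: leq_sum => i _.
  rewrite !inE; have := (hphi i).2.
  case: (phi i =P x) => [ex|nx]; case: (phi i =P y) => [ey|ny].
  - by move: nxy; rewrite -ex -ey eqxx.
  - by move=> H; subst x; rewrite eqxx (negbTE H) /= ?andbF ?andbT; case: (y \in A i).
  - by move=> H; subst y; rewrite eqxx (negbTE H) /= ?andbF ?andbT ?addn0; case: (x \in A i).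
  - by case: (x \in A i); case: (y \in A i).
have Exx x : E x x = 0.
  apply: big1 => i _; have := (hphi i).2; case: (phi i =P x) => [->|_].
    by move/negbTE->.
  by rewrite andbF.
have rsplit x : x \in X ->
    rx x = \sum_(y in X) E x y + \sum_(y in Y | y \notin X) E x y.
  move=> hx.
  have -> : rx x = \sum_(y in Y) E x y.
    rewrite /E exchange_big /=; apply: eq_bigr => i _.
    rewrite (bigD1 (phi i)) ?(hphi i).1 //= eqxx andbT big1 ?addn0 //.
    by move=> y /andP[_ ny]; rewrite eq_sym (negbTE ny) andbF.
  rewrite (bigID (fun y => y \in X)) /=; congr (_ + _).
  apply: eq_bigl => y; apply/andP/idP => [[]//|hy]; split=> //.
  exact: (subsetP XY).
have cbound x : x \in X -> \sum_(y in Y | y \notin X) E x y <= (w - v) * lam.+1.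
  move=> hx; apply: (@leq_trans (\sum_(y in Y | y \notin X) lam.+1)).
    apply: leq_sum => y /andP[hy nyX].
    have nxy : x != y by apply: contraNneq nyX => <-.
    have := key x y (subsetP XY x hx) hy nxy; lia.
  rewrite sum_nat_cond_const; apply: leq_mul => //.
  have -> : [set y | (y \in Y) && (y \notin X)] = Y :\: X.
    by apply/setP => y; rewrite !inE andbC.
  by rewrite cardsD (setIidPr XY) cY cX.
have repl x : x \in X -> rx x * (k - 1) = lam * (v - 1).
  move=> hx.
  have cXx : #|X :\ x| = v - 1 by move: (cardsD1 x X); rewrite hx cX; lia.
  rewrite -cXx [RHS]mulnC -sum_nat_const.
  have -> : \sum_(y in X :\ x) lam = \sum_(y in X :\ x) N0 x y.
    apply: eq_bigr => y; rewrite !inE => /andP[nyx hy].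
    by rewrite hl' // eq_sym.
  rewrite /N0 exchange_big /= /rx big_distrl /=; apply: eq_bigr => i _.
  case hxi: (x \in A i); last by rewrite mul0n big1.
  rewrite mul1n sum_ind.
  have -> : #|[pred y in X :\ x | y \in A i]| = #|A i :\ x|.
    apply: eq_card => y; rewrite !inE /=.
    case hy: (y \in A i); last by rewrite !andbF.
    by rewrite (subsetP (hA i).1 y hy) !andbT.
  by move: (cardsD1 x (A i)); rewrite hxi (hA i).2; lia.
have sym : 2 * \sum_(x in X) \sum_(y in X) E x y <= v * (v - 1).
  rewrite mul2n -addnn {2}(exchange_big) /= -big_split /=.
  rewrite -cX -sum_nat_const; apply: leq_sum => x hx.
  rewrite -big_split /= (bigD1 x) //= Exx /=.
  have cXx : #|X :\ x| = #|X| - 1 by move: (cardsD1 x X); rewrite hx; lia.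
  rewrite -cXx -sum1_card.
  have -> : \sum_(y in X :\ x) 1 = \sum_(y in X | y != x) 1.
    by apply: eq_bigl => y; rewrite !inE andbC.
  apply: leq_sum => y /andP[hy nyx].
  have nxy : x != y by rewrite eq_sym.
  have := key x y (subsetP XY x hx) (subsetP XY y hy) nxy.
  rewrite hl' //; lia.
have [x0 hx0] : exists x0, x0 \in X by apply/card_gt0P; rewrite cX.
have km1 : 0 < k - 1 by lia.
pose R := rx x0.
have hall x : x \in X -> rx x = R.
  move=> hx; apply/eqP; rewrite -(eqn_pmul2r km1) repl // repl //.
have sumR : \sum_(x in X) rx x = v * R.
  by rewrite (eq_bigr (fun=> R)) ?sum_nat_const ?cX.
have tot : \sum_(x in X) rx x = \sum_(x in X) \sum_(y in X) E x y
    + \sum_(x in X) \sum_(y in Y | y \notin X) E x y.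
  by rewrite -big_split /=; apply: eq_bigr => x hx; rewrite rsplit.
have cb : \sum_(x in X) \sum_(y in Y | y \notin X) E x y <= v * ((w - v) * lam.+1).
  apply: (@leq_trans (\sum_(x in X) ((w - v) * lam.+1))).
    by apply: leq_sum => x hx; exact: cbound.
  by rewrite sum_nat_const cX.
have wv : v <= w by rewrite -cX -cY; exact: subset_leq_card.
have n1 : 2 * (v * R) <= v * (v - 1) + 2 * (v * ((w - v) * lam.+1)) by lia.
have n2 : 2 * R <= (v - 1) + 2 * ((w - v) * lam.+1).
  by rewrite -(leq_pmul2l v0) mulnDr; lia.
have n3 : 2 * R + (v + 2 * lam * v + 1) <= w * (2 * (lam + 1)) by nia.
have hr : ((lam * (v - 1))%:R / (k - 1)%:R = (R%:R : rat))%R.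
  by rewrite -(repl x0 hx0) natrM mulfK // pnatr_eq0 -lt0n.
rewrite /= hr.
have -> : ((R%:R : rat) / (lam + 1)%:R + (v + 2 * lam * v + 1)%:R / (2 * (lam + 1))%:R
   = (2 * R + (v + 2 * lam * v + 1))%:R / (2 * (lam + 1))%:R)%R.
  have l0 : (0 <= (lam%:R : rat))%R by apply: ler0n.
  rewrite !natrD !natrM; field.
  apply/andP; split. 1-2: apply: lt0r_neq0. 1-2: lra.
rewrite ler_pdivrMr ?ltr0n ?muln_gt0 ?addn1 //.
rewrite -natrM ler_nat; by move: n3; rewrite !addn1.
Qed.
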